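(* Let $(X^n)_{n\ge1}$ be a sequence of FK-spaces containing $\phi$ and let $Y=\bigcap_nX^n$ with its intersection FK-topology. Then $E(Y)=\bigcap_nE(X^n)$ for each of $E=D_p^qS,\ D_p^qW,\ D_p^qF,\ D_p^qB$.
   Context: An FK-space is a vector subspace of the space $w$ of all complex sequences with a complete metrizable locally convex topology in which coordinate functionals are continuous; $X'$ is its continuous dual. If $X^n$ has paranorm $\rho_n$ and seminorms $(s_{nk})_k$, then $Y=\bigcap_nX^n$ is an FK-space with paranorm $\sum_n\rho_n/(2^n(1+\rho_n))$ and seminorms $(s_{nk})_{n,k}$. $\delta^j$ has $1$ in position $j$, $0$ elsewhere; $\phi=\operatorname{span}\{\delta^j\}$. $p(n)<q(n)$ are nonnegative integer sequences with $q(n)\to\infty$. For $x\in w$, $x^{(k)}=\sum_{j=1}^kx_j\delta^j$ and $T_n(x)=\frac{1}{q(n)-p(n)}\sum_{k=p(n)+1}^{q(n)}x^{(k)}$. For an FK-space $X\supseteq\phi$: $D_p^qS(X)=\{x\in X: T_n(x)\to x\text{ in }X\}$; $D_p^qW(X)=\{x\in X: f(T_n(x))\to f(x)\ \forall f\in X'\}$; $D_p^qF(X)=\{x\in X:\lim_n f(T_n(x))\text{ exists }\forall f\in X'\}$; $D_p^qB(X)=\{x\in X:\sup_n|f(T_n(x))|<\infty\ \forall f\in X'\}$. *)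

(* Defs.v *)
From Stdlib Require Import Reals Arith Cantor.
From Coquelicot Require Import Coquelicot.

Open Scope R_scope.

(** w : all complex sequences (0-based indexing). *)
Definition seqC := nat -> C.

Definition seq0 : seqC := fun _ => RtoC 0.
Definition seq_add (x y : seqC) : seqC := fun j => Cplus (x j) (y j).
Definition seq_opp (x : seqC) : seqC := fun j => Copp (x j).
Definition seq_sub (x y : seqC) : seqC := seq_add x (seq_opp y).
Definition seq_scal (a : C) (x : seqC) : seqC := fun j => Cmult a (x j).

Definition delta (j : nat) : seqC :=
  fun i => if Nat.eqb i j then RtoC 1 else RtoC 0.

(** A sequence space X ⊆ w together with a countable family of seminorms
    (sn k)_k defining its (metrizable, locally convex) topology. *)
Record SeqSpace := {
  mem : seqC -> Prop;
  sn  : nat -> seqC -> R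
}.

Definition sn_upto (X : SeqSpace) (k : nat) (x : seqC) : R :=
  sum_f_R0 (fun i => sn X i x) k.

(** X is an FK-space: a linear subspace of w, the sn k are seminorms on X,
    the induced topology is complete, and coordinate functionals are
    continuous (which also makes the topology Hausdorff, hence metrizable). *)
Definition is_FK (X : SeqSpace) : Prop :=
  mem X seq0 /\
  (forall x y, mem X x -> mem X y -> mem X (seq_add x y)) /\
  (forall a x, mem X x -> mem X (seq_scal a x)) /\
  (forall k x, mem X x -> 0 <= sn X k x) /\
  (forall k x y, mem X x -> mem X y ->
      sn X k (seq_add x y) <= sn X k x + sn X k y) /\
  (forall k a x, mem X x -> sn X k (seq_scal a x) = Cmod a * sn X k x) /\
  (forall j, exists k M, forall x, mem X x -> Cmod (x j) <= M * sn_upto X k x) /\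
  (forall u : nat -> seqC, (forall m, mem X (u m)) ->
     (forall k eps, 0 < eps -> exists N, forall m m', (N <= m)%nat -> (N <= m')%nat ->
          sn X k (seq_sub (u m) (u m')) < eps) ->
     exists x, mem X x /\ forall k, is_lim_seq (fun m => sn X k (seq_sub (u m) x)) 0).

(** f belongs to the continuous dual X' (f is only relevant on X). *)
Definition dual (X : SeqSpace) (f : seqC -> C) : Prop :=
  (forall x y, mem X x -> mem X y -> f (seq_add x y) = Cplus (f x) (f y)) /\
  (forall a x, mem X x -> f (seq_scal a x) = Cmult a (f x)) /\
  (exists k M, forall x, mem X x -> Cmod (f x) <= M * sn_upto X k x).

(** Y = ⋂_n X^n with the seminorms (s_{nk})_{n,k}, enumerated by Cantor's
    bijection nat -> nat * nat. *)
Definition Yint (X : nat -> SeqSpace) : SeqSpace := {|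
  mem := fun x => forall n, mem (X n) x;
  sn := fun m x => sn (X (fst (Cantor.of_nat m))) (snd (Cantor.of_nat m)) x
|}.

Definition trunc (k : nat) (x : seqC) : seqC :=
  fun j => if Nat.ltb j k then x j else RtoC 0.

Definition Tn (p q : nat -> nat) (n : nat) (x : seqC) : seqC :=
  fun j => Cmult (Cinv (RtoC (INR (q n - p n))))
                 (sum_n_m (fun k => trunc k x j) (S (p n)) (q n)).

Definition DS (p q : nat -> nat) (X : SeqSpace) (x : seqC) : Prop :=
  mem X x /\ forall k, is_lim_seq (fun n => sn X k (seq_sub (Tn p q n x) x)) 0.

Definition DW (p q : nat -> nat) (X : SeqSpace) (x : seqC) : Prop :=
  mem X x /\ forall f, dual X f ->
    is_lim_seq (fun n => Cmod (Cminus (f (Tn p q n x)) (f x))) 0.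

Definition DF (p q : nat -> nat) (X : SeqSpace) (x : seqC) : Prop :=
  mem X x /\ forall f, dual X f ->
    exists l : C, is_lim_seq (fun n => Cmod (Cminus (f (Tn p q n x)) l)) 0.

Definition DB (p q : nat -> nat) (X : SeqSpace) (x : seqC) : Prop :=
  mem X x /\ forall f, dual X f ->
    exists M : R, forall n, Cmod (f (Tn p q n x)) <= M.

(* Main.v *)
Require Import Defs.
From Stdlib Require Import Reals Arith Cantor Classical ClassicalEpsilon FunctionalExtensionality PropExtensionality Lra Lia.
From Coquelicot Require Import Coquelicot.
From mathcomp Require classical_sets.

Open Scope R_scope.

Section HBsec.
Variable I : Type.
Definition V := I -> C.
Definition vadd (u v : V) : V := fun i => Cplus (u i) (v i).
Definition vscal (a : C) (u : V) : V := fun i => Cmult a (u i).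
Definition vzero : V := fun _ => RtoC 0.

Lemma RtoC_m1 : RtoC (-1) = Copp (RtoC 1).
Proof. apply injective_projections; simpl; ring. Qed.

Ltac vext := apply functional_extensionality; intro; unfold vadd, vscal, vzero;
  repeat first [rewrite RtoC_m1 | rewrite RtoC_mult | rewrite RtoC_plus | rewrite RtoC_opp | rewrite RtoC_minus].

Variables (A : V -> Prop) (hA0 : A vzero)
  (hAadd : forall u v, A u -> A v -> A (vadd u v))
  (hAscal : forall a u, A u -> A (vscal a u))
  (p : V -> R)
  (hptri : forall u v, A u -> A v -> p (vadd u v) <= p u + p v)
  (hphom : forall a u, A u -> p (vscal a u) = Cmod a * p u)
  (D : V -> Prop) (hDA : forall u, D u -> A u) (hD0 : D vzero)
  (hDadd : forall u v, D u -> D v -> D (vadd u v))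
  (hDscal : forall r u, D u -> D (vscal (RtoC r) u)).

Lemma p_rscal r u : A u -> 0 <= r -> p (vscal (RtoC r) u) = r * p u.
Proof. intros Au hr. rewrite hphom by auto. rewrite Cmod_R, Rabs_pos_eq; auto. Qed.

Section Real.
Variables (g : V -> R)
  (hgadd : forall u v, D u -> D v -> g (vadd u v) = g u + g v)
  (hgscal : forall r u, D u -> g (vscal (RtoC r) u) = r * g u)
  (hgp : forall u, D u -> g u <= p u).

Definition PG (G : V * R -> Prop) : Prop :=
  (forall x a b, G (x,a) -> G (x,b) -> a = b) /\
  (forall x a, G (x,a) -> A x) /\
  (forall x a y b, G (x,a) -> G (y,b) -> G (vadd x y, a+b)) /\
  (forall r x a, G (x,a) -> G (vscal (RtoC r) x, r*a)) /\
  (forall x a, G (x,a) -> a <= p x) /\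
  (forall x, D x -> G (x, g x)).

Definition G0 (z : V * R) : Prop := D (fst z) /\ snd z = g (fst z).

Lemma PG_G0 : PG G0.
Proof.
  unfold PG; split; [|split; [|split; [|split; [|split]]]]; unfold G0; simpl.
  - intros x a b [_ e1] [_ e2]; subst; auto.
  - intros x a [h _]; auto.
  - intros x a y b [h1 e1] [h2 e2]; subst; split; [auto| symmetry; auto].
  - intros r x a [h e]; subst; split; [auto| symmetry; auto].
  - intros x a [h e]; subst; auto.
  - split; auto.
Qed.

Definition P' (G : V * R -> Prop) := PG (fun z => G0 z \/ G z).

Lemma chain_ok (F : (V * R -> Prop) -> Prop) :
  (forall X, F X -> P' X) ->
  (forall X Y, F X -> F Y -> (forall z, X z -> Y z) \/ (forall z, Y z -> X z)) ->
  P' (fun z => exists2 X, F X & X z).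
Proof.
  intros FP Ftot.
  set (U := fun z => G0 z \/ (exists2 X, F X & X z)).
  assert (pair : forall z1 z2, U z1 -> U z2 -> exists H, PG H /\ (forall z, H z -> U z) /\ H z1 /\ H z2).
  { intros z1 z2 [h1|[X1 F1 h1]] [h2|[X2 F2 h2]].
    - exists G0; split; [apply PG_G0|]; split; [intros z hz; left; auto| auto].
    - exists (fun z => G0 z \/ X2 z); split; [apply FP; auto|]; split; [|auto].
      intros z [hz|hz]; [left; auto| right; exists X2; auto].
    - exists (fun z => G0 z \/ X1 z); split; [apply FP; auto|]; split; [|auto].
      intros z [hz|hz]; [left; auto| right; exists X1; auto].
    - destruct (Ftot X1 X2 F1 F2) as [s|s].
      + exists (fun z => G0 z \/ X2 z); split; [apply FP; auto|]; split; [|auto].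
        intros z [hz|hz]; [left; auto| right; exists X2; auto].
      + exists (fun z => G0 z \/ X1 z); split; [apply FP; auto|]; split; [|auto].
        intros z [hz|hz]; [left; auto| right; exists X1; auto]. }
  unfold P'; fold U. unfold PG; repeat split.
  - intros x a b ha hb. destruct (pair _ _ ha hb) as [H [PH [_ [h1 h2]]]].
    destruct PH as [f _]. eapply f; eauto.
  - intros x a ha. destruct (pair _ _ ha ha) as [H [PH [_ [h1 h2]]]].
    destruct PH as [_ [f _]]. eapply f; eauto.
  - intros x a y b ha hb. destruct (pair _ _ ha hb) as [H [PH [sub [h1 h2]]]].
    destruct PH as [_ [_ [f _]]]. apply sub; eapply f; eauto.
  - intros r x a ha. destruct (pair _ _ ha ha) as [H [PH [sub [h1 h2]]]].
    destruct PH as [_ [_ [_ [f _]]]]. apply sub; eapply f; eauto.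
  - intros x a ha. destruct (pair _ _ ha ha) as [H [PH [sub [h1 h2]]]].
    destruct PH as [_ [_ [_ [_ [f _]]]]]. eapply f; eauto.
  - intros x hx. left. split; auto.
Qed.

Section Ext.
Variable G : V * R -> Prop.
Hypothesis PGG : PG G.
Variable x0 : V.
Hypothesis Ax0 : A x0.
Hypothesis nx0 : ~ exists a, G (x0, a).

Lemma G_zero : G (vzero, 0).
Proof.
  destruct PGG as [_ [_ [_ [_ [_ hD]]]]].
  replace 0 with (g vzero). apply hD; auto.
  replace vzero with (vscal (RtoC 0) vzero) at 1 by (vext; ring).
  rewrite hgscal; auto; ring.
Qed.

Lemma G_sub s a s' a' : G (s,a) -> G (s',a') -> G (vadd s (vscal (RtoC (-1)) s'), a + (-1) * a').
Proof.
  destruct PGG as [_ [_ [hadd [hsc _]]]]. intros h1 h2. apply hadd; auto.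
Qed.

Lemma c_exists : exists c, forall s a, G (s,a) ->
   a + c <= p (vadd s x0) /\ a - c <= p (vadd s (vscal (RtoC (-1)) x0)).
Proof.
  destruct PGG as [hfun [hA [hadd [hsc [hb hD]]]]].
  set (E := fun y => exists s a, G (s,a) /\ y = a - p (vadd s (vscal (RtoC (-1)) x0))).
  assert (key : forall s a s' a', G (s,a) -> G (s',a') ->
            a' - p (vadd s' (vscal (RtoC (-1)) x0)) <= p (vadd s x0) - a).
  { intros s a s' a' h h'.
    assert (a + a' <= p (vadd s s')) by (apply hb; apply hadd; auto).
    assert (p (vadd s s') <= p (vadd s x0) + p (vadd s' (vscal (RtoC (-1)) x0))).
    { replace (vadd s s') with (vadd (vadd s x0) (vadd s' (vscal (RtoC (-1)) x0))) by (vext; ring).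
      apply hptri; apply hAadd; eauto. }
    lra. }
  assert (bE : bound E).
  { exists (p (vadd vzero x0) - 0). intros y [s [a [h ->]]]. eapply key; eauto. apply G_zero. }
  assert (nE : exists y, E y).
  { exists (0 - p (vadd vzero (vscal (RtoC (-1)) x0))). exists vzero, 0; split; auto. apply G_zero. }
  destruct (completeness E bE nE) as [c [ub lub]].
  exists c. intros s a h. split.
  - cut (c <= p (vadd s x0) - a). lra.
    apply lub. intros y [s' [a' [h' ->]]]. eapply key; eauto.
  - cut (a - p (vadd s (vscal (RtoC (-1)) x0)) <= c). lra.
    apply ub. exists s, a; auto.
Qed.

Variable c : R.
Hypothesis hc : forall s a, G (s,a) ->
   a + c <= p (vadd s x0) /\ a - c <= p (vadd s (vscal (RtoC (-1)) x0)).

Definition G' (z : V * R) : Prop :=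
  exists s a r, G (s,a) /\ z = (vadd s (vscal (RtoC r) x0), a + r * c).

Lemma G_sub_G' z : G z -> G' z.
Proof.
  intros h. destruct z as [x a]. exists x, a, 0. split; auto.
  f_equal; [vext; ring| ring].
Qed.

Lemma G'_x0 : G' (x0, c).
Proof.
  exists vzero, 0, 1. split. apply G_zero. f_equal; [vext; ring| ring].
Qed.

Lemma PG_G' : PG G'.
Proof.
  pose proof PGG as PG0.
  destruct PGG as [hfun [hA [hadd [hsc [hb hD]]]]].
  unfold PG; repeat split.
  - intros x a b [s [a1 [r [h1 e1]]]] [s' [a2 [r' [h2 e2]]]].
    injection e1 as ex1 ea1. injection e2 as ex2 ea2. rewrite ea1, ea2. rewrite ex1 in ex2.
    clear ex1 ea1 ea2.
    destruct (Req_dec r r') as [<-|nr].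
    + assert (s = s').
      { apply functional_extensionality; intro i.
        pose proof (f_equal (fun f => f i) ex2) as q. unfold vadd, vscal in q; simpl in q.
        replace (s i) with (Cminus (Cplus (s i) (Cmult (RtoC r) (x0 i))) (Cmult (RtoC r) (x0 i))) by ring.
        rewrite q. ring. }
      subst s'. rewrite (hfun _ _ _ h1 h2). auto.
    + exfalso. apply nx0.
      exists ((/ (r' - r)) * (a1 + (-1) * a2)).
      replace x0 with (vscal (RtoC (/ (r' - r))) (vadd s (vscal (RtoC (-1)) s'))).
      { apply hsc. apply G_sub; auto. }
      apply functional_extensionality; intro i.
      pose proof (f_equal (fun f => f i) ex2) as q. unfold vadd, vscal in q |- *; simpl in q.
      assert (nz : RtoC (r' - r) <> RtoC 0).
      { intro e. apply RtoC_inj in e. apply nr. lra. }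
      rewrite RtoC_inv by lra. rewrite RtoC_minus in nz |- *. rewrite RtoC_m1.
      assert (e : s i = Cplus (s' i) (Cmult (Cminus (RtoC r') (RtoC r)) (x0 i))).
      { replace (s i) with (Cminus (Cplus (s i) (Cmult (RtoC r) (x0 i))) (Cmult (RtoC r) (x0 i))) by ring.
        rewrite q. ring. }
      rewrite e. field. intro e'; apply nz; rewrite e'; auto.
  - intros x a [s [a1 [r [h1 e1]]]]. injection e1; intros; subst.
    apply hAadd; eauto.
  - intros x a y b [s [a1 [r [h1 e1]]]] [s' [a2 [r' [h2 e2]]]].
    injection e1; injection e2; intros; subst.
    exists (vadd s s'), (a1 + a2), (r + r'). split; auto.
    f_equal; [vext; ring| ring].
  - intros t x a [s [a1 [r [h1 e1]]]]. injection e1; intros; subst.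
    exists (vscal (RtoC t) s), (t * a1), (t * r). split; auto.
    f_equal; [vext; ring| ring].
  - intros x a [s [a1 [r [h1 e1]]]]. injection e1; intros; subst.
    destruct (Rlt_le_dec 0 r) as [rp|rn].
    + assert (hh := hc _ _ (hsc (/ r) _ _ h1)). destruct hh as [hh _].
      replace (vadd s (vscal (RtoC r) x0)) with (vscal (RtoC r) (vadd (vscal (RtoC (/ r)) s) x0)).
      * rewrite p_rscal by (try apply hAadd; eauto; lra).
        apply Rmult_le_compat_l with (r := r) in hh; [|lra].
        replace (r * (/ r * a1 + c)) with (a1 + r * c) in hh by (field; lra). auto.
      * apply functional_extensionality; intro i; unfold vadd, vscal.
        rewrite RtoC_inv by lra. field. intro e; apply RtoC_inj in e; lra.
    + destruct (Req_dec r 0) as [r0|rn'].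
      * subst. replace (vadd s (vscal (RtoC 0) x0)) with s by (vext; ring).
        replace (a1 + 0 * c) with a1 by ring. auto.
      * assert (hh := hc _ _ (hsc (/ (- r)) _ _ h1)). destruct hh as [_ hh].
        replace (vadd s (vscal (RtoC r) x0)) with
          (vscal (RtoC (-r)) (vadd (vscal (RtoC (/ (-r))) s) (vscal (RtoC (-1)) x0))).
        -- rewrite p_rscal by (try (apply hAadd; eauto); lra).
           apply Rmult_le_compat_l with (r := -r) in hh; [|lra].
           replace (- r * (/ - r * a1 - c)) with (a1 + r * c) in hh by (field; lra). auto.
        -- apply functional_extensionality; intro i; unfold vadd, vscal.
           assert (nz : RtoC r <> RtoC 0) by (intro e; apply RtoC_inj in e; lra).
           rewrite RtoC_inv by lra. rewrite !RtoC_opp, RtoC_m1. field.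
           intro e; apply nz; replace (RtoC r) with (Copp (Copp (RtoC r))) by ring; rewrite e; ring.
  - intros x hx. apply G_sub_G'. auto.
Qed.
End Ext.

Lemma HB_real : exists U : V -> R,
  (forall u v, A u -> A v -> U (vadd u v) = U u + U v) /\
  (forall r u, A u -> U (vscal (RtoC r) u) = r * U u) /\
  (forall u, D u -> U u = g u) /\
  (forall u, A u -> U u <= p u).
Proof.
  destruct (classical_sets.Zorn_bigcup (T := V * R) (P := P')) as [M [PM maxM]].
  { intros F FP Ftot. apply chain_ok; [exact FP|].
    intros X Y FX FY. destruct (Ftot X Y FX FY) as [h|h]; [left|right]; exact h. }
  set (G := fun z => G0 z \/ M z).
  assert (PGG : PG G) by exact PM.
  assert (full : forall x, A x -> exists a, G (x,a)).
  { intros x Ax. apply NNPP; intro nx.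
    destruct (c_exists G PGG x Ax) as [c hc].
    apply (maxM (G' G x c)).
    - split.
      + intros z hz. apply G_sub_G'. right; auto.
      + intro sub. apply nx. exists c. right. apply sub. apply G'_x0; auto.
    - unfold P'.
      replace (fun z => G0 z \/ G' G x c z) with (G' G x c).
      { apply PG_G'; auto. }
      apply functional_extensionality; intro z; apply propositional_extensionality; split.
      + intro; right; auto.
      + intros [h|h]; auto. apply G_sub_G'. left; auto. }
  destruct PGG as [hfun [hA [hadd [hsc [hb hD]]]]].
  set (U := fun x => match excluded_middle_informative (exists a, G (x,a)) with
                     | left h => proj1_sig (constructive_indefinite_description _ h)
                     | right _ => 0 end).
  assert (hU : forall x a, G (x,a) -> U x = a).
  { intros x a h. unfold U. destruct excluded_middle_informative as [e|e].
    - destruct constructive_indefinite_description as [b hb']. simpl. eapply hfun; eauto.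
    - exfalso; apply e; eauto. }
  exists U. repeat split.
  - intros u v Au Av. destruct (full u Au) as [a ha]. destruct (full v Av) as [b hb'].
    rewrite (hU _ _ ha), (hU _ _ hb'). apply hU. apply hadd; auto.
  - intros r u Au. destruct (full u Au) as [a ha].
    rewrite (hU _ _ ha). apply hU. apply hsc; auto.
  - intros u Du. apply hU. apply hD; auto.
  - intros u Au. destruct (full u Au) as [a ha]. rewrite (hU _ _ ha). apply hb; auto.
Qed.
End Real.

Lemma p_nonneg u : A u -> 0 <= p u.
Proof.
  intros Au.
  assert (h := hptri u (vscal (RtoC (-1)) u) Au (hAscal _ _ Au)).
  replace (vadd u (vscal (RtoC (-1)) u)) with (vscal (RtoC 0) u) in h by (vext; ring).
  rewrite !hphom in h by auto. rewrite Cmod_R, Cmod_R in h.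
  rewrite Rabs_R0, Rabs_Ropp, Rabs_R1 in h || rewrite Rabs_R0 in h.
  replace (Rabs (-1)) with 1 in h by (rewrite Rabs_left; lra). lra.
Qed.

Lemma HB_complex (f : V -> C)
  (hDscalC : forall a u, D u -> D (vscal a u))
  (hfadd : forall u v, D u -> D v -> f (vadd u v) = Cplus (f u) (f v))
  (hfscal : forall a u, D u -> f (vscal a u) = Cmult a (f u))
  (hfp : forall u, D u -> Cmod (f u) <= p u) :
  exists F : V -> C,
  (forall u v, A u -> A v -> F (vadd u v) = Cplus (F u) (F v)) /\
  (forall a u, A u -> F (vscal a u) = Cmult a (F u)) /\
  (forall u, D u -> F u = f u) /\
  (forall u, A u -> Cmod (F u) <= p u).
Proof.
  destruct (HB_real (fun u => Re (f u))) as [U [Uadd [Uscal [Uext Ub]]]].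
  - intros u v Du Dv. rewrite hfadd by auto. reflexivity.
  - intros r u Du. rewrite hfscal by auto. apply re_scal_l.
  - intros u Du. eapply Rle_trans; [apply Rle_abs|]. eapply Rle_trans; [apply re_le_Cmod|]. auto.
  - set (F := fun u => (U u, - U (vscal Ci u)) : C).
    assert (Fscal : forall a u, A u -> F (vscal a u) = Cmult a (F u)).
    { intros [ar ai] u Au.
      assert (e1 : vscal (ar, ai) u = vadd (vscal (RtoC ar) u) (vscal (RtoC ai) (vscal Ci u))).
      { apply functional_extensionality; intro i; unfold vadd, vscal.
        apply injective_projections; simpl; ring. }
      assert (e2 : vscal Ci (vscal (ar, ai) u) = vadd (vscal (RtoC ar) (vscal Ci u)) (vscal (RtoC (- ai)) u)).
      { apply functional_extensionality; intro i; unfold vadd, vscal.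
        apply injective_projections; simpl; ring. }
      unfold F. rewrite e2, e1. rewrite !Uadd, !Uscal by auto.
      apply injective_projections; simpl; ring. }
    exists F. split; [|split; [|split]].
    + intros u v Au Av. unfold F.
      replace (vscal Ci (vadd u v)) with (vadd (vscal Ci u) (vscal Ci v)) by (vext; ring).
      rewrite !Uadd by auto. apply injective_projections; simpl; ring.
    + exact Fscal.
    + intros u Du. unfold F. rewrite !Uext by auto. rewrite hfscal by auto.
      apply injective_projections; unfold Re, Im; simpl; ring.
    + intros u Au.
      destruct (Ceq_dec (F u) (RtoC 0)) as [z0|nz].
      * rewrite z0, Cmod_0. apply p_nonneg; auto.
      * set (z := F u) in *.
        assert (mpos : 0 < Cmod z) by (apply Cmod_gt_0; auto).
        set (a := Cmult (Cconj z) (RtoC (/ Cmod z))).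
        assert (az : Cmult a z = RtoC (Cmod z)).
        { unfold a. assert (h2 := Cmod2_alt z).
          destruct z as [x y]. simpl. unfold Cmult, Cconj, RtoC; simpl.
          apply injective_projections; simpl; [|field; lra].
          set (m := Cmod (x,y)) in *.
          assert (h3 : m^2 = x^2+y^2) by (rewrite h2; unfold Re, Im; simpl; ring).
          clearbody m. transitivity ((x^2+y^2)/m); [field; lra|].
          rewrite <- h3. field; lra. }
        assert (ma : Cmod a = 1).
        { unfold a. rewrite Cmod_mult, Cmod_conj, Cmod_R, Rabs_pos_eq.
          field; lra. left; apply Rinv_0_lt_compat; auto. }
        assert (h := Ub _ (hAscal a _ Au)).
        rewrite hphom, ma, Rmult_1_l in h by auto.
        assert (e : U (vscal a u) = Cmod z).
        { change (U (vscal a u)) with (Re (F (vscal a u))). rewrite Fscal by auto.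
          fold z. rewrite az. reflexivity. }
        lra.
Qed.
End HBsec.

Open Scope R_scope.

Fixpoint csum (a : nat -> C) (k : nat) : C :=
  match k with O => a O | S k' => Cplus (csum a k') (a (S k')) end.

Lemma sum_ge_term (a : nat -> R) K i : (forall j, 0 <= a j) -> (i <= K)%nat -> a i <= sum_f_R0 a K.
Proof.
  intros h. induction K; intros hi.
  - inversion hi; subst; simpl; lra.
  - simpl. inversion hi; subst.
    + assert (0 <= sum_f_R0 a K) by (apply cond_pos_sum; auto). lra.
    + specialize (IHK H0). specialize (h (S K)). lra.
Qed.

Lemma sum_le_const (a : nat -> R) k c : (forall j, (j <= k)%nat -> a j <= c) -> sum_f_R0 a k <= INR (S k) * c.
Proof.
  induction k; intros h.
  - simpl. specialize (h O (le_n _)). lra.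
  - simpl sum_f_R0. rewrite S_INR. assert (h1 := IHk (fun j hj => h j (le_S _ _ hj))).
    specialize (h (S k) (le_n _)). rewrite S_INR in h1 |- *. lra.
Qed.

Lemma sum_single (a : nat -> R) k i : (i <= k)%nat -> (forall j, j <> i -> a j = 0) -> sum_f_R0 a k = a i.
Proof.
  intros hi h. induction k.
  - inversion hi; subst; reflexivity.
  - simpl. inversion hi; subst.
    + rewrite (sum_eq _ (fun _ => 0)). rewrite sum_cte. ring.
      intros j hj. apply h. lia.
    + rewrite IHk by auto. rewrite (h (S k)) by lia. ring.
Qed.

Lemma csum_tri (a b : nat -> C) k :
  Cmod (Cminus (csum a k) (csum b k)) <= sum_f_R0 (fun i => Cmod (Cminus (a i) (b i))) k.
Proof.
  induction k; simpl. lra.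
  replace (Cminus (Cplus (csum a k) (a (S k))) (Cplus (csum b k) (b (S k))))
    with (Cplus (Cminus (csum a k) (csum b k)) (Cminus (a (S k)) (b (S k)))) by ring.
  eapply Rle_trans; [apply Cmod_triangle|]. lra.
Qed.

Lemma csum_bound (a : nat -> C) k : Cmod (csum a k) <= sum_f_R0 (fun i => Cmod (a i)) k.
Proof.
  induction k; simpl. lra.
  eapply Rle_trans; [apply Cmod_triangle|]. lra.
Qed.

Lemma lim_sum0 (c : nat -> nat -> R) k :
  (forall i, (i <= k)%nat -> is_lim_seq (c i) 0) ->
  is_lim_seq (fun m => sum_f_R0 (fun i => c i m) k) 0.
Proof.
  induction k; intros h.
  - simpl. apply h; auto.
  - simpl. replace (Finite 0) with (Rbar_plus (Finite 0) (Finite 0)) by (simpl; f_equal; ring).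
    apply is_lim_seq_plus'. apply IHk; auto. apply h; auto.
Qed.

Lemma lim_csum (a : nat -> nat -> C) (l : nat -> C) k :
  (forall i, (i <= k)%nat -> is_lim_seq (fun m => Cmod (Cminus (a i m) (l i))) 0) ->
  is_lim_seq (fun m => Cmod (Cminus (csum (fun i => a i m) k) (csum l k))) 0.
Proof.
  intros h.
  apply is_lim_seq_le_le with (u := fun _ => 0) (w := fun m => sum_f_R0 (fun i => Cmod (Cminus (a i m) (l i))) k).
  - intros m; split; [apply Cmod_ge_0| apply csum_tri].
  - apply is_lim_seq_const.
  - apply lim_sum0. auto.
Qed.

Section Main.
Variable X : nat -> SeqSpace.
Hypothesis hFK : forall n, is_FK (X n).
Hypothesis hphi : forall n j, mem (X n) (delta j).

Lemma mem0 n : mem (X n) seq0.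
Proof. destruct (hFK n) as [h _]; exact h. Qed.
Lemma memadd n x y : mem (X n) x -> mem (X n) y -> mem (X n) (seq_add x y).
Proof. destruct (hFK n) as [_ [h _]]; auto. Qed.
Lemma memscal n a x : mem (X n) x -> mem (X n) (seq_scal a x).
Proof. destruct (hFK n) as [_ [_ [h _]]]; auto. Qed.
Lemma sn_nonneg n k x : mem (X n) x -> 0 <= sn (X n) k x.
Proof. destruct (hFK n) as [_ [_ [_ [h _]]]]; auto. Qed.
Lemma sn_tri n k x y : mem (X n) x -> mem (X n) y -> sn (X n) k (seq_add x y) <= sn (X n) k x + sn (X n) k y.
Proof. destruct (hFK n) as [_ [_ [_ [_ [h _]]]]]; auto. Qed.
Lemma sn_hom n k a x : mem (X n) x -> sn (X n) k (seq_scal a x) = Cmod a * sn (X n) k x.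
Proof. destruct (hFK n) as [_ [_ [_ [_ [_ [h _]]]]]]; auto. Qed.
Lemma sn_zero n k : sn (X n) k seq0 = 0.
Proof.
  replace seq0 with (seq_scal (RtoC 0) seq0) at 1.
  rewrite sn_hom by apply mem0. rewrite Cmod_0; ring.
  apply functional_extensionality; intro j; unfold seq_scal, seq0. ring.
Qed.

Lemma finsupp_mem n K : forall z : seqC, (forall j, (K <= j)%nat -> z j = RtoC 0) -> mem (X n) z.
Proof.
  induction K; intros z hz.
  - replace z with seq0. apply mem0. apply functional_extensionality; intro j. rewrite hz; auto. lia.
  - replace z with (seq_add (trunc K z) (seq_scal (z K) (delta K))).
    + apply memadd. apply IHK. intros j hj. unfold trunc.
      destruct (Nat.ltb_spec j K); [lia|auto].
      apply memscal; auto.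
    + apply functional_extensionality; intro j. unfold seq_add, seq_scal, trunc, delta.
      destruct (Nat.ltb_spec j K); destruct (Nat.eqb_spec j K); subst; try lia.
      * ring.
      * ring.
      * rewrite (hz j) by lia. ring.
Qed.

Lemma Tn_mem (p q : nat -> nat) n m x : mem (X n) (Defs.Tn p q m x).
Proof.
  apply finsupp_mem with (K := q m). intros j hj. unfold Defs.Tn.
  rewrite (sum_n_m_ext_loc _ (fun _ => zero)).
  - rewrite sum_n_m_const_zero. apply injective_projections; simpl; ring.
  - intros k hk. unfold trunc. destruct (Nat.ltb_spec j k); [lia|reflexivity].
Qed.

Lemma memY x : mem (Yint X) x <-> forall n, mem (X n) x.
Proof. reflexivity. Qed.

Fixpoint Kmax (n k : nat) : nat :=
  match k with O => Cantor.to_nat (n, O) | S k' => Nat.max (Kmax n k') (Cantor.to_nat (n, S k')) end.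

Lemma Kmax_ge n k j : (j <= k)%nat -> (Cantor.to_nat (n, j) <= Kmax n k)%nat.
Proof.
  induction k; intros h; simpl.
  - inversion h; subst; auto.
  - destruct (Nat.eq_dec j (S k)). subst; apply Nat.le_max_r.
    etransitivity; [apply IHk; lia| apply Nat.le_max_l].
Qed.

Lemma snY_nonneg x i : mem (Yint X) x -> 0 <= sn (Yint X) i x.
Proof. intros h. simpl. apply sn_nonneg. apply h. Qed.

Lemma dual_restrict n f : dual (X n) f -> dual (Yint X) f.
Proof.
  intros [hadd [hsc [k [M hb]]]]. split; [|split].
  - intros x y hx hy. apply hadd; auto.
  - intros a x hx. apply hsc; auto.
  - exists (Kmax n k), (Rmax M 0 * INR (S k)). intros x hx.
    assert (hx' := hx n).
    eapply Rle_trans; [apply hb; auto|].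
    assert (s0 : 0 <= sn_upto (X n) k x).
    { unfold sn_upto. apply cond_pos_sum. intro; apply sn_nonneg; auto. }
    eapply Rle_trans; [apply Rmult_le_compat_r; [exact s0| apply Rmax_l]|].
    rewrite Rmult_assoc. apply Rmult_le_compat_l; [apply Rmax_r|].
    unfold sn_upto at 1. apply sum_le_const. intros j hj.
    replace (sn (X n) j x) with (sn (Yint X) (Cantor.to_nat (n, j)) x).
    + unfold sn_upto. apply (sum_ge_term (fun i => sn (Yint X) i x)). intro; apply snY_nonneg; auto. apply Kmax_ge; auto.
    + change (sn (X (fst (Cantor.of_nat (Cantor.to_nat (n,j))))) (snd (Cantor.of_nat (Cantor.to_nat (n,j)))) x = sn (X n) j x).
      rewrite Cantor.cancel_of_to. reflexivity.
Qed.

Definition aI i := fst (Cantor.of_nat i).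
Definition bI i := snd (Cantor.of_nat i).
Definition VV := V (nat * nat).
Definition row (w : VV) (i : nat) : seqC := fun j => w (i, j).
Definition diagv (m : nat) (y : seqC) : VV := fun ij => if Nat.leb (fst ij) m then y (snd ij) else RtoC 0.
Definition emb (i : nat) (u : seqC) : VV := fun ij => if Nat.eqb (fst ij) i then u (snd ij) else RtoC 0.

Lemma rowdiag m y i : (i <= m)%nat -> row (diagv m y) i = y.
Proof. intros h; apply functional_extensionality; intro j; unfold row, diagv; simpl. destruct (Nat.leb_spec i m); [reflexivity|lia]. Qed.
Lemma rowdiag2 m y i : (m < i)%nat -> row (diagv m y) i = seq0.
Proof. intros h; apply functional_extensionality; intro j; unfold row, diagv; simpl. destruct (Nat.leb_spec i m); [lia|reflexivity]. Qed.
Lemma rowemb1 i u : row (emb i u) i = u.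
Proof. apply functional_extensionality; intro j; unfold row, emb; simpl. rewrite Nat.eqb_refl; reflexivity. Qed.
Lemma rowemb2 i u i' : i' <> i -> row (emb i u) i' = seq0.
Proof. intros h; apply functional_extensionality; intro j; unfold row, emb; simpl. destruct (Nat.eqb_spec i' i); [lia|reflexivity]. Qed.
Lemma rowadd u v i : row (vadd _ u v) i = seq_add (row u i) (row v i).
Proof. reflexivity. Qed.
Lemma rowscal a u i : row (vscal _ a u) i = seq_scal a (row u i).
Proof. reflexivity. Qed.

Lemma decomp f : dual (Yint X) f -> exists k (g : nat -> seqC -> C),
  (forall i, (i <= k)%nat -> dual (X (aI i)) (g i)) /\
  (forall y, mem (Yint X) y -> f y = csum (fun i => g i y) k).
Proof.
  intros [fadd [fsc [k [M fb]]]].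
  set (M0 := Rmax M 0).
  assert (M0p : 0 <= M0) by apply Rmax_r.
  set (A := fun w : VV => forall i, (i <= k)%nat -> mem (X (aI i)) (row w i)).
  set (D := fun w : VV => exists y, mem (Yint X) y /\ w = diagv k y).
  set (pp := fun w : VV => M0 * sum_f_R0 (fun i => sn (X (aI i)) (bI i) (row w i)) k).
  set (phi := fun w : VV => f (row w 0)).
  assert (hAadd : forall u v, A u -> A v -> A (vadd _ u v)).
  { intros u v hu hv i hi. rewrite rowadd. apply memadd; auto. }
  assert (hAscal : forall a u, A u -> A (vscal _ a u)).
  { intros a u hu i hi. rewrite rowscal. apply memscal; auto. }
  assert (hptri : forall u v, A u -> A v -> pp (vadd _ u v) <= pp u + pp v).
  { intros u v hu hv. unfold pp. rewrite <- Rmult_plus_distr_l, <- plus_sum.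
    apply Rmult_le_compat_l; auto. apply sum_Rle. intros i hi. rewrite rowadd. apply sn_tri; auto. }
  assert (hphom : forall a u, A u -> pp (vscal _ a u) = Cmod a * pp u).
  { intros a u hu. unfold pp.
    rewrite (sum_eq _ (fun i => sn (X (aI i)) (bI i) (row u i) * Cmod a)).
    - rewrite <- scal_sum. ring.
    - intros i hi. rewrite rowscal, sn_hom by auto. ring. }
  assert (hDA : forall u, D u -> A u).
  { intros w [y [hy ->]] i hi. rewrite rowdiag by auto. apply hy. }
  assert (hD0 : D (vzero _)).
  { exists seq0. split. intro n; apply mem0.
    apply functional_extensionality; intros [i j]; unfold vzero, diagv, seq0; simpl.
    destruct (Nat.leb i k); reflexivity. }
  assert (hDscalC : forall a u, D u -> D (vscal _ a u)).
  { intros a w [y [hy ->]]. exists (seq_scal a y). split. intro n; apply memscal; apply hy.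
    apply functional_extensionality; intros [i j]; unfold vscal, diagv, seq_scal; simpl.
    destruct (Nat.leb i k); [reflexivity| ring]. }
  assert (hDadd : forall u v, D u -> D v -> D (vadd _ u v)).
  { intros u v [y [hy ->]] [y' [hy' ->]]. exists (seq_add y y'). split. intro n; apply memadd; [apply hy| apply hy'].
    apply functional_extensionality; intros [i j]; unfold vadd, diagv, seq_add; simpl.
    destruct (Nat.leb i k); [reflexivity| ring]. }
  assert (hDscal : forall (r : R) u, D u -> D (vscal _ (RtoC r) u)) by (intros; apply hDscalC; auto).
  assert (hfadd : forall u v, D u -> D v -> phi (vadd _ u v) = Cplus (phi u) (phi v)).
  { intros u v [y [hy ->]] [y' [hy' ->]]. unfold phi. rewrite rowadd, !rowdiag by lia. apply fadd; auto. }
  assert (hfscal : forall a u, D u -> phi (vscal _ a u) = Cmult a (phi u)).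
  { intros a u [y [hy ->]]. unfold phi. rewrite rowscal, !rowdiag by lia. apply fsc; auto. }
  assert (hfp : forall u, D u -> Cmod (phi u) <= pp u).
  { intros w [y [hy ->]]. unfold phi, pp. rewrite rowdiag by lia.
    eapply Rle_trans; [apply fb; auto|]. unfold sn_upto.
    rewrite (sum_eq (fun i => sn (X (aI i)) (bI i) (row (diagv k y) i)) (fun i => sn (Yint X) i y)).
    - apply Rmult_le_compat_r; [|apply Rmax_l]. apply cond_pos_sum. intro; apply snY_nonneg; auto.
    - intros i hi. rewrite rowdiag by auto. reflexivity. }
  destruct (HB_complex (nat*nat) A hAadd hAscal pp hptri hphom D hDA hD0 hDadd hDscal phi hDscalC hfadd hfscal hfp)
    as [F [Fadd [Fscal [Fext Fb]]]].
  assert (Amem : forall i u, (i <= k)%nat -> mem (X (aI i)) u -> (forall i', (i' <= k)%nat -> mem (X (aI i')) u) \/ True -> A (emb i u)).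
  { intros i u hi hu _ i' hi'. destruct (Nat.eq_dec i' i).
    - subst. rewrite rowemb1. auto.
    - rewrite rowemb2 by auto. apply mem0. }
  exists k, (fun i u => F (emb i u)). split.
  - intros i hi. split; [|split].
    + intros u v hu hv.
      replace (emb i (seq_add u v)) with (vadd _ (emb i u) (emb i v)).
      * apply Fadd; apply (Amem i); auto.
      * apply functional_extensionality; intros [i' j]; unfold vadd, emb, seq_add; simpl.
        destruct (Nat.eqb i' i); [reflexivity| ring].
    + intros a u hu.
      replace (emb i (seq_scal a u)) with (vscal _ a (emb i u)).
      * apply Fscal; apply (Amem i); auto.
      * apply functional_extensionality; intros [i' j]; unfold vscal, emb, seq_scal; simpl.
        destruct (Nat.eqb i' i); [reflexivity| ring].
    + exists (bI i), M0. intros u hu.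
      eapply Rle_trans; [apply Fb; apply (Amem i); auto|]. unfold pp.
      apply Rmult_le_compat_l; auto.
      rewrite (sum_single _ k i hi).
      * rewrite rowemb1. unfold sn_upto.
        apply (sum_ge_term (fun j => sn (X (aI i)) j u)); auto. intro; apply sn_nonneg; auto.
      * intros j hj. rewrite rowemb2 by auto. apply sn_zero.
  - intros y hy.
    assert (Ad : forall m, A (diagv m y)).
    { intros m i hi. destruct (le_lt_dec i m) as [l|l].
      - rewrite rowdiag by exact l. apply hy.
      - rewrite rowdiag2 by exact l. apply mem0. }
    assert (Ae : forall i, A (emb i y)).
    { intros i i' hi'. destruct (Nat.eq_dec i' i).
      - subst. rewrite rowemb1. apply hy.
      - rewrite rowemb2 by auto. apply mem0. }
    assert (claim : forall m, F (diagv m y) = csum (fun i => F (emb i y)) m).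
    { induction m.
      - simpl. f_equal. apply functional_extensionality; intros [i j]; unfold diagv, emb; simpl.
        destruct i; reflexivity.
      - simpl. rewrite <- IHm. rewrite <- Fadd by auto. f_equal.
        apply functional_extensionality; intros [i j]; unfold vadd, diagv, emb; simpl.
        destruct (Nat.leb_spec i m); destruct (Nat.eqb_spec i (S m)); destruct (Nat.leb_spec i (S m)); try lia; ring. }
    rewrite <- claim. rewrite Fext.
    + unfold phi. rewrite rowdiag by lia. reflexivity.
    + exists y; auto.
Qed.

Lemma TnY p q m x : mem (Yint X) (Defs.Tn p q m x).
Proof. intro n; apply Tn_mem. Qed.

Lemma DS_iff p q x : DS p q (Yint X) x <-> (forall n, DS p q (X n) x).
Proof.
  split.
  - intros [hm hl] n. split; [apply hm|]. intro k.
    specialize (hl (Cantor.to_nat (n,k))).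
    change (is_lim_seq (fun m => sn (X (fst (Cantor.of_nat (Cantor.to_nat (n,k))))) (snd (Cantor.of_nat (Cantor.to_nat (n,k))))
       (seq_sub (Defs.Tn p q m x) x)) 0) in hl.
    rewrite Cantor.cancel_of_to in hl. exact hl.
  - intros h. split. intro n; apply h. intro m. apply h.
Qed.

Lemma DW_iff p q x : DW p q (Yint X) x <-> (forall n, DW p q (X n) x).
Proof.
  split.
  - intros [hm hw] n. split; [apply hm|]. intros f hf. apply hw. apply (dual_restrict n); auto.
  - intros h. assert (xY : mem (Yint X) x) by (intro n; apply h).
    split; auto. intros f hf. destruct (decomp f hf) as [k [g [hg hfg]]].
    apply is_lim_seq_ext with (fun m => Cmod (Cminus (csum (fun i => g i (Defs.Tn p q m x)) k) (csum (fun i => g i x) k))).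
    + intro m. rewrite <- !hfg; auto. apply TnY.
    + apply (lim_csum (fun i m => g i (Defs.Tn p q m x)) (fun i => g i x)).
      intros i hi. destruct (h (aI i)) as [_ hw]. apply hw. apply hg; auto.
Qed.

Lemma DF_iff p q x : DF p q (Yint X) x <-> (forall n, DF p q (X n) x).
Proof.
  split.
  - intros [hm hw] n. split; [apply hm|]. intros f hf. apply hw. apply (dual_restrict n); auto.
  - intros h. assert (xY : mem (Yint X) x) by (intro n; apply h).
    split; auto. intros f hf. destruct (decomp f hf) as [k [g [hg hfg]]].
    assert (H : forall i, exists l : C, (i <= k)%nat ->
               is_lim_seq (fun m => Cmod (Cminus (g i (Defs.Tn p q m x)) l)) 0).
    { intro i. destruct (le_lt_dec i k) as [hi|hi].
      - destruct (h (aI i)) as [_ hw]. destruct (hw (g i) (hg i hi)) as [l hl].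
        exists l; auto.
      - exists (RtoC 0). intro; lia. }
    set (lf := fun i => proj1_sig (constructive_indefinite_description _ (H i))).
    exists (csum lf k).
    apply is_lim_seq_ext with (fun m => Cmod (Cminus (csum (fun i => g i (Defs.Tn p q m x)) k) (csum lf k))).
    + intro m. rewrite <- !hfg; auto. apply TnY.
    + apply (lim_csum (fun i m => g i (Defs.Tn p q m x)) lf).
      intros i hi. unfold lf. destruct (constructive_indefinite_description _ (H i)) as [l hl]. simpl. auto.
Qed.

Lemma DB_iff p q x : DB p q (Yint X) x <-> (forall n, DB p q (X n) x).
Proof.
  split.
  - intros [hm hw] n. split; [apply hm|]. intros f hf. apply hw. apply (dual_restrict n); auto.
  - intros h. assert (xY : mem (Yint X) x) by (intro n; apply h).
    split; auto. intros f hf. destruct (decomp f hf) as [k [g [hg hfg]]].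
    assert (H : forall i, exists Mi : R, (i <= k)%nat -> forall m, Cmod (g i (Defs.Tn p q m x)) <= Mi).
    { intro i. destruct (le_lt_dec i k) as [hi|hi].
      - destruct (h (aI i)) as [_ hw]. destruct (hw (g i) (hg i hi)) as [Mi hM].
        exists Mi; auto.
      - exists 0. intro; lia. }
    set (Mf := fun i => proj1_sig (constructive_indefinite_description _ (H i))).
    exists (sum_f_R0 Mf k). intro m.
    rewrite hfg by apply TnY.
    eapply Rle_trans; [apply csum_bound|]. apply sum_Rle. intros i hi.
    unfold Mf. destruct (constructive_indefinite_description _ (H i)) as [Mi hM]. simpl. auto.
Qed.
End Main.

Theorem mainTheorem18 (X : nat -> SeqSpace) (p q : nat -> nat)
  (hpq : forall n, (p n < q n)%nat)
  (hq : forall M, exists N, forall n, (N <= n)%nat -> (M <= q n)%nat)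
  (hFK : forall n, is_FK (X n))
  (hphi : forall n j, mem (X n) (delta j)) :
  (forall x, DS p q (Yint X) x <-> (forall n, DS p q (X n) x)) /\
  (forall x, DW p q (Yint X) x <-> (forall n, DW p q (X n) x)) /\
  (forall x, DF p q (Yint X) x <-> (forall n, DF p q (X n) x)) /\
  (forall x, DB p q (Yint X) x <-> (forall n, DB p q (X n) x)).
Proof.
  split; [|split; [|split]]; intro x.
  - apply DS_iff.
  - apply DW_iff; auto.
  - apply DF_iff; auto.
  - apply DB_iff; auto.
Qed.
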